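(* Consider the following market for a sin good subject to a per-unit tax $t>0$. There are $N$ firms $k=1,\dots,N$ producing at common constant marginal cost $m$ and competing à la Bertrand–Nash. Each firm $k$ simultaneously chooses a salient posted price $p^s_k$ and a shrouded tax surcharge $\tau_k\in\{0,t\}$ (it ''shrouds'' if $\tau_k=t$); its effective consumer price is $p_k=p^s_k+\tau_k$ and its producer price is $p_k-t$. A fraction $\lambda$ of consumers, with $0<\lambda<1$, are attentive: they observe all effective prices and all shrouding decisions, and buying from a shrouding firm entails a fixed disutility $s\ge 0$. The remaining fraction $1-\lambda$ are inattentive: they observe posted prices but perceive the surcharge of a shrouding firm as $\theta t$ with $\theta<1$; demand of inattentive consumers is split equally among the firms with the lowest posted price. Firms cannot price-discriminate between consumer types. If $N\ge 4$, there exists an asymmetric pure-strategy equilibrium with two market segments: (i) at least two firms shroud taxes, choosing $p^s_k=m$ and $\tau_k=t$, and serve all inattentive consumers; and (ii) at least two firms do not shroud taxes, choosing $p^s_k=m+t$ and $\tau_k=0$, and serve all attentive consumers.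
   Context: Consumers otherwise behave as cost-minimizing buyers of a homogeneous good given their (perceived) prices. *)

(* Defs.v *)
From HB Require Import structures.
From mathcomp Require Import all_boot all_order all_algebra.
Set Implicit Arguments. Unset Strict Implicit. Unset Printing Implicit Defensive.
Import Order.TTheory GRing.Theory Num.Theory.
Local Open Scope ring_scope.

(* A firm's strategy: (salient posted price p^s, shrouding flag).
   shrouding = true means tau = t, false means tau = 0. *)
Section Market.
Variable R : realFieldType.
Variable N : nat.
Notation strat := (R * bool)%type.
Notation profile := ('I_N -> strat).

Definition surcharge (t : R) (x : strat) : R := if x.2 then t else 0.
Definition eff_price (t : R) (x : strat) : R := x.1 + surcharge t x.
Definition att_cost (t s : R) (x : strat) : R :=
  eff_price t x + (if x.2 then s else 0).

Definition inatt_set (sigma : profile) : {set 'I_N} :=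
  [set k | [forall j, (sigma k).1 <= (sigma j).1]].
Definition inatt_share (sigma : profile) (k : 'I_N) : R :=
  if k \in inatt_set sigma then (#|inatt_set sigma|%:R)^-1 else 0.

(* attentive consumers: cost-minimizing; among cost-minimizing firms they
   (weakly) prefer non-shrouding ones; split equally among the preferred. *)
Definition att_min (t s : R) (sigma : profile) : {set 'I_N} :=
  [set k | [forall j, att_cost t s (sigma k) <= att_cost t s (sigma j)]].
Definition att_pref (t s : R) (sigma : profile) : {set 'I_N} :=
  let M := att_min t s sigma in
  let M' := [set k in M | ~~ (sigma k).2] in
  if M' != set0 then M' else M.
Definition att_share (t s : R) (sigma : profile) (k : 'I_N) : R :=
  if k \in att_pref t s sigma then (#|att_pref t s sigma|%:R)^-1 else 0.

(* quantity sold by firm k: lam = mass of attentive consumers; qA x, qI x are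
   the (nonnegative) per-consumer purchase quantities of an attentive /
   inattentive consumer buying from a firm with strategy x. *)
Definition quantity (t s lam : R) (qA qI : strat -> R)
  (sigma : profile) (k : 'I_N) : R :=
  lam * att_share t s sigma k * qA (sigma k)
  + (1 - lam) * inatt_share sigma k * qI (sigma k).

Definition profit (m t s lam : R) (qA qI : strat -> R)
  (sigma : profile) (k : 'I_N) : R :=
  (eff_price t (sigma k) - t - m) * quantity t s lam qA qI sigma k.

Definition deviate (sigma : profile) (k : 'I_N) (x : strat) : profile :=
  fun j => if j == k then x else sigma j.

Definition is_equilibrium (m t s lam : R) (qA qI : strat -> R)
  (sigma : profile) : Prop :=
  forall (k : 'I_N) (x : strat),
    profit m t s lam qA qI (deviate sigma k x) k <= profit m t s lam qA qI sigma k.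

End Market.

(* Main.v *)
Require Import Defs.
From HB Require Import structures.
From mathcomp Require Import all_boot all_order all_algebra lra.
Import Order.TTheory GRing.Theory Num.Theory.
Local Open Scope ring_scope.

Lemma sum_share (R : realFieldType) (I : finType) (P : pred I) (S : {set I}) :
  (forall k, (k \in S) = P k) -> S != set0 ->
  \sum_(k | P k) (if k \in S then (#|S|%:R)^-1 else 0 : R) = 1.
Proof.
move=> HS Hne.
rewrite (eq_bigr (fun=> (#|S|%:R)^-1)); last by move=> k Pk; rewrite HS Pk.
rewrite (eq_bigl (fun k => k \in S)); last by move=> k; rewrite HS.
rewrite sumr_const -(mulr_natr (#|S|%:R)^-1) mulVf // pnatr_eq0 -lt0n card_gt0 //.
Qed.

Theorem lemma3 (R : realFieldType) (N : nat) (m t s theta lam : R)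
  (qA qI : R * bool -> R) :
  0 < t -> 0 < lam -> lam < 1 -> 0 <= s -> theta < 1 ->
  (forall x, 0 <= qA x) -> (forall x, 0 <= qI x) ->
  (4 <= N)%N ->
  exists sigma : 'I_N -> R * bool,
    is_equilibrium m t s lam qA qI sigma
    /\ (2 <= #|[set k | (sigma k).2]|)%N
    /\ (2 <= #|[set k | ~~ (sigma k).2]|)%N
    /\ (forall k, (sigma k).2 -> (sigma k).1 = m)
    /\ (forall k, ~~ (sigma k).2 -> (sigma k).1 = m + t)
    /\ \sum_(k | (sigma k).2) inatt_share sigma k = 1
    /\ \sum_(k | ~~ (sigma k).2) att_share t s sigma k = 1.
Proof.
move=> t0 l0 l1 s0 _ qA0 qI0.
case: N => [|[|[|[|n]]]] // _.
set i0 : 'I_n.+4 := Ordinal (isT : (0 < n.+4)%N).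
set i1 : 'I_n.+4 := Ordinal (isT : (1 < n.+4)%N).
set i2 : 'I_n.+4 := Ordinal (isT : (2 < n.+4)%N).
set i3 : 'I_n.+4 := Ordinal (isT : (3 < n.+4)%N).
pose sigma (k : 'I_n.+4) := if (val k < 2)%N then (m, true) else (m + t, false).
have s2 k : (sigma k).2 = (val k < 2)%N by rewrite /sigma; case: ifP.
have s1 k : (sigma k).1 = if (val k < 2)%N then m else m + t
  by rewrite /sigma; case: ifP.
have mlt : m < m + t by rewrite ltrDl.
have Hinatt : forall k, (k \in inatt_set sigma) = (val k < 2)%N.
  move=> k; rewrite inE; apply/forallP/idP.
    move=> /(_ i0); rewrite !s1 /=; case: ifP => // _.
    by rewrite leNgt mlt.
  by move=> Hk j; rewrite !s1 Hk; case: ifP => _ //; rewrite ltW.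
have Hattmin : forall k, ~~ (sigma k).2 -> k \in att_min t s sigma.
  move=> k; rewrite s2 => Hk; rewrite inE; apply/forallP => j.
  rewrite /att_cost /eff_price /surcharge /sigma (negbTE Hk) /=.
  case: ifP => _ /=; last by rewrite !addr0.
  by rewrite !addr0 lerDl.
have Hattpref : forall k, (k \in att_pref t s sigma) = ~~ (sigma k).2.
  move=> k; rewrite /att_pref.
  have ne : [set k in att_min t s sigma | ~~ (sigma k).2] != set0.
    apply/set0Pn; exists i2; rewrite inE Hattmin ?s2 //.
  rewrite ne inE; apply/andP/idP; first by case.
  by move=> H; split => //; apply: Hattmin.
have cardge (P : pred 'I_n.+4) a b : a != b -> P a -> P b -> (2 <= #|[set k | P k]|)%N.
  move=> ab Pa Pb.
  apply: leq_trans (subset_leq_card (_ : [set a; b] \subset _)); first by rewrite cards2 ab.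
  by apply/subsetP => x; rewrite !inE => /orP[]/eqP->.
exists sigma.
split; last split; [| by apply: (cardge _ i0 i1); rewrite ?s2 |].
  move=> k [p b].
  have -> : profit m t s lam qA qI sigma k = 0.
    rewrite /profit /eff_price /surcharge /sigma.
    by case: ifP => _ /=; rewrite ?addr0 addrK subrr mul0r.
  set sig' := deviate sigma k (p, b).
  have Hk : sig' k = (p, b) by rewrite /sig' /deviate eqxx.
  have Hj : forall j, j != k -> sig' j = sigma j.
    by move=> j /negbTE jk; rewrite /sig' /deviate jk.
  rewrite /profit Hk.
  have [mle|mgt] := lerP (eff_price t (p, b) - t - m) 0.
    apply: mulr_le0_ge0 => //.
    rewrite /quantity; apply: addr_ge0; apply: mulr_ge0 => //;
      (apply: mulr_ge0; [rewrite ?subr_ge0 ltW // |]).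
      by rewrite /att_share; case: ifP => _ //; rewrite invr_ge0 ler0n.
    by rewrite /inatt_share; case: ifP => _ //; rewrite invr_ge0 ler0n.
  have [hp hc] : m < p /\ m + t < att_cost t s (p, b).
    clear -t0 s0 mgt; move: mgt; rewrite /att_cost /eff_price /surcharge /=.
    case: b => /= h; split; lra.
  have I0 : k \notin inatt_set sig'.
    have [j jk sj] : exists2 j, j != k & (val j < 2)%N.
      by case: (eqVneq k i0) => [->|nk]; [exists i1 | exists i0; rewrite // eq_sym].
    rewrite inE; apply/negP => /forallP /(_ j).
    by rewrite Hk Hj // s1 sj /= leNgt hp.
  have A0 : k \notin att_pref t s sig'.
    have [j jk sj] : exists2 j, j != k & ~~ (val j < 2)%N.
      by case: (eqVneq k i2) => [->|nk]; [exists i3 | exists i2; rewrite // eq_sym].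
    have nm : k \notin att_min t s sig'.
      rewrite inE; apply/negP => /forallP /(_ j).
      rewrite Hk Hj // /att_cost /eff_price /surcharge /sigma (negbTE sj) /=.
      by rewrite !addr0 leNgt hc.
    apply: contra nm; rewrite /att_pref; case: ifP => _ //.
    by rewrite inE => /andP[].
  rewrite /quantity /att_share /inatt_share (negbTE I0) (negbTE A0).
  by rewrite !mulr0 !mul0r addr0 mulr0.
split; first by apply: (cardge _ i2 i3); rewrite ?s2.
split; first by move=> k; rewrite s1 s2 => ->.
split; first by move=> k; rewrite s1 s2 => /negbTE ->.
split.
  rewrite /inatt_share; apply: sum_share => [k|]; first by rewrite Hinatt s2.
  by apply/set0Pn; exists i0; rewrite Hinatt.
rewrite /att_share; apply: sum_share => [k|]; first by rewrite Hattpref.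
by apply/set0Pn; exists i2; rewrite Hattpref s2.
Qed.
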